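(* Let $k\ge 1$ and let $L=(l_1,\ldots,l_k)$ be a sequence of positive integers, and let $S=S(L)$ be the spider defined by $L$. Let $t$ be an integer with $1\le t\le \alpha(S)$. Then for each $1\le i\le k$ and each $1\le j<l_i$ we have $$|\mathcal{I}^t_{v_{i,j}}(S)|\le |\mathcal{I}^t_{v_{i,l_i}}(S)|.$$
   Context: For a graph $G$, $\alpha(G)$ is the maximum size of an independent set in $G$, and for an integer $t\le\alpha(G)$, $\mathcal{I}^t(G)$ denotes the family of all independent sets of $G$ of size $t$. For a vertex $x$, $\mathcal{I}^t_x(G)$ denotes the subfamily of sets in $\mathcal{I}^t(G)$ containing $x$ (the star centered at $x$). Given a sequence of positive integers $L=(l_1,\ldots,l_k)$, the spider $S(L)$ is the tree consisting of a head vertex $v_0$ and, for each $1\le i\le k$, a leg which is the path $v_0,v_{i,1},v_{i,2},\ldots,v_{i,l_i}$; distinct legs share only $v_0$. *)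

(* Defs.v *)
From mathcomp Require Import all_boot.
Set Implicit Arguments. Unset Strict Implicit. Unset Printing Implicit Defensive.

Definition independent (T : finType) (e : rel T) (A : {set T}) : bool :=
  [forall x in A, forall y in A, ~~ e x y].

Definition alpha (T : finType) (e : rel T) : nat :=
  \max_(A : {set T} | independent e A) #|A|.

Definition Ind (T : finType) (e : rel T) (t : nat) : {set {set T}} :=
  [set A : {set T} | independent e A & #|A| == t].

Definition IndStar (T : finType) (e : rel T) (t : nat) (x : T) : {set {set T}} :=
  [set A in Ind e t | x \in A].

(* The spider S(L), L = (l_0,...,l_{k-1}) given as l : 'I_k -> nat.
   Vertices: None = head v_0; Some (Tagged i j) = v_{i, j+1} (j : 'I_(l i)). *)
Definition spider_vert (k : nat) (l : 'I_k -> nat) : finType :=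
  option {i : 'I_k & 'I_(l i)}.

Definition spider_adj (k : nat) (l : 'I_k -> nat) : rel (spider_vert l) :=
  fun x y =>
    match x, y with
    | None, Some u => val (tagged u) == 0
    | Some u, None => val (tagged u) == 0
    | Some u, Some w =>
        (tag u == tag w) &&
        (((val (tagged u)).+1 == val (tagged w)) ||
         ((val (tagged w)).+1 == val (tagged u)))
    | None, None => false
    end.

(* v_{i,j} for 1 <= j <= l_i (and the head v_0 when j = 0 or j out of range). *)
Definition spider_v (k : nat) (l : 'I_k -> nat) (i : 'I_k) (j : nat)
  : spider_vert l :=
  match (insub j.-1 : option 'I_(l i)) with
  | Some o => Some (Tagged (fun i => 'I_(l i)) o)
  | None => None
  end.

Arguments spider_vert {k} l.
Arguments spider_adj {k} l.
Arguments spider_v {k} l i j.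

(* Main.v *)
Require Import Defs.
From mathcomp Require Import all_boot.
From mathcomp Require Import zify.
Set Implicit Arguments. Unset Strict Implicit. Unset Printing Implicit Defensive.

Definition E k (l : 'I_k -> nat) (i : 'I_k) (o : 'I_(l i)) : spider_vert l :=
  Some (Tagged (fun i => 'I_(l i)) o).

Definition rn (a b n : nat) := if a <= n then a + b - n else n.

Definition rr k (l : 'I_k -> nat) (i : 'I_k) (a : nat) (o : 'I_(l i)) : 'I_(l i) :=
  insubd o (rn a (l i).-1 o).

Definition phi k (l : 'I_k -> nat) (i : 'I_k) (a : nat) (x : spider_vert l)
  : spider_vert l :=
  if [pick o : 'I_(l i) | E o == x] is Some o then E (rr a o) else x.

Lemma E_inj k (l : 'I_k -> nat) (i : 'I_k) : injective (@E k l i).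
Proof.
move=> o1 o2 [] H.
have := congr1 (tagged_as (Tagged (fun i => 'I_(l i)) o1)) H.
by rewrite !tagged_asE.
Qed.

Lemma val_rr k (l : 'I_k -> nat) (i : 'I_k) a (o : 'I_(l i)) :
  val (rr a o) = rn a (l i).-1 o.
Proof.
rewrite /rr val_insubd /rn; have := ltn_ord o.
case: ifP => h1; case: (leqP a o) => h2; rewrite ?h2 in h1 *; try lia; done.
Qed.

Lemma phiE k (l : 'I_k -> nat) (i : 'I_k) a (o : 'I_(l i)) :
  phi i a (E o) = E (rr a o).
Proof.
rewrite /phi; case: pickP => [o' /eqP /E_inj -> // | /(_ o)]; by rewrite eqxx.
Qed.

Lemma phi_out k (l : 'I_k -> nat) (i : 'I_k) a (x : spider_vert l) :
  (forall o : 'I_(l i), x != E o) -> phi i a x = x.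
Proof.
move=> H; rewrite /phi; case: pickP => [o' /eqP Ho | //].
by move: (H o'); rewrite Ho eqxx.
Qed.

Lemma vertP k (l : 'I_k -> nat) (i : 'I_k) (x : spider_vert l) :
  (exists o : 'I_(l i), x = E o) \/
  ((forall o : 'I_(l i), x != E o) /\
   forall o : 'I_(l i), spider_adj l x (E o) = (x == None) && (val o == 0) /\
                        spider_adj l (E o) x = (x == None) && (val o == 0)).
Proof.
case: x => [[i' o']|].
  case: (eqVneq i' i) => [e|ne].
    by subst i'; left; exists o'.
  right; split.
    move=> o; apply/negP => /eqP [] e.
    by rewrite e eqxx in ne.
  move=> o /=; split; apply/negbTE; apply/andP => [[/eqP e _]]; by rewrite e eqxx in ne.
right; split => // o.
Qed.

Lemma phiK k (l : 'I_k -> nat) (i : 'I_k) a (x : spider_vert l) :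
  phi i a (phi i a x) = x.
Proof.
case: (vertP i x) => [[o ->]|[H _]].
  rewrite !phiE; congr E; apply: val_inj; rewrite !val_rr /rn.
  case: o => n hn /=.
  case: (leqP a n) => h; case: ifP => h2 //; lia.
by rewrite !(phi_out _ H).
Qed.

Lemma adj_phi k (l : 'I_k -> nat) (i : 'I_k) a (ob : 'I_(l i))
  (hab : a <= val ob) (hb : (val ob).+1 = l i) (x y : spider_vert l) :
  spider_adj l (phi i a x) (phi i a y) ->
  [|| spider_adj l x y, x == E ob | y == E ob].
Proof.
case: (vertP i x) => [[o1 ->]|[H1 A1]]; case: (vertP i y) => [[o2 ->]|[H2 A2]].
- rewrite !phiE /= eqxx /= !val_rr /rn.
  have := ltn_ord o1; have := ltn_ord o2.
  have e1 : (E o1 == E ob) = (val o1 == val ob).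
    by apply/eqP/eqP => [/E_inj -> // | e]; congr E; apply: val_inj.
  have e2 : (E o2 == E ob) = (val o2 == val ob).
    by apply/eqP/eqP => [/E_inj -> // | e]; congr E; apply: val_inj.
  rewrite e1 e2; clear e1 e2; move: hab hb.
  case: o1 => n1 p1; case: o2 => n2 p2; case: ob => nb pb /=.
  case: ifP => ?; case: ifP => ?; lia.
- rewrite phiE (phi_out a H2); have [_ ->] := A2 (rr a o1).
  case/andP => yN; rewrite val_rr => h0.
  have [_ ->] := A2 o1; rewrite yN /=.
  suff : (val o1 == 0) || (val o1 == val ob).
    case/orP => [-> //| /eqP e]; apply/orP; right; apply/orP; left; apply/eqP; congr E; exact: val_inj.
  move: h0 hab hb; rewrite /rn; case: o1 => n1 p1; case: ob => nb pb /=; case: ifP => ?; lia.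
- rewrite phiE (phi_out a H1); have [-> _] := A1 (rr a o2).
  case/andP => yN; rewrite val_rr => h0.
  have [-> _] := A1 o2; rewrite yN /=.
  suff : (val o2 == 0) || (val o2 == val ob).
    case/orP => [-> //| /eqP e]; apply/orP; right; apply/orP; right; apply/eqP; congr E; exact: val_inj.
  move: h0 hab hb; rewrite /rn; case: o2 => n1 p1; case: ob => nb pb /=; case: ifP => ?; lia.
- by rewrite (phi_out a H1) (phi_out a H2) => ->.
Qed.

Theorem theorem2p1 (k : nat) (l : 'I_k -> nat) (t : nat) :
  0 < k ->
  (forall i, 0 < l i) ->
  1 <= t <= alpha (spider_adj l) ->
  forall (i : 'I_k) (j : nat), 1 <= j < l i ->
    #|IndStar (spider_adj l) t (spider_v l i j)|
      <= #|IndStar (spider_adj l) t (spider_v l i (l i))|.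
Proof.
move=> _ _ _ i j /andP [j1 jl].
have ha : j.-1 < l i by lia.
have hb : (l i).-1 < l i by lia.
set oa := Ordinal ha; set ob := Ordinal hb.
have vj : spider_v l i j = E oa.
  rewrite /spider_v; case: insubP => [o _ vo | /negP]; last by lia.
  by congr Some; congr Tagged; apply: val_inj.
have vl : spider_v l i (l i) = E ob.
  rewrite /spider_v; case: insubP => [o _ vo | /negP]; last by lia.
  by congr Some; congr Tagged; apply: val_inj.
rewrite vj vl.
pose ph := @phi k l i j.-1.
have phaK : ph (E oa) = E ob.
  rewrite /ph phiE; congr E; apply: val_inj; rewrite val_rr /rn /= leqnn; lia.
have phbK : ph (E ob) = E oa.
  rewrite /ph phiE; congr E; apply: val_inj; rewrite val_rr /rn /=.
  case: ifP; lia.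
have phK : involutive ph by move=> x; apply: phiK.
have phinj : injective ph := inv_inj phK.
set I := IndStar (spider_adj l) t.
rewrite -(cardsID (I (E ob)) (I (E oa))) -(cardsID (I (E oa)) (I (E ob))).
rewrite setIC leq_add2l.
set g := fun A : {set spider_vert l} => ph @: A.
have gK : involutive g.
  move=> A; rewrite /g -imset_comp.
  rewrite (eq_imset (g:=id)) ?imset_id // => x /=; exact: phK.
rewrite -(card_imset _ (inv_inj gK)).
apply: subset_leq_card; apply/subsetP => B /imsetP [A HA ->].
move: HA; rewrite /I /IndStar /Ind !inE.
case/andP => /negP nb /andP [/andP [indA /eqP cA] aA].
have bA : E ob \notin A by apply/negP => bA; apply: nb; rewrite indA cA eqxx.
have indB : independent (spider_adj l) (g A).
  apply/forallP => x'; apply/implyP => /imsetP [x xA ->].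
  apply/forallP => y'; apply/implyP => /imsetP [y yA ->].
  apply/negP => /(adj_phi (ob:=ob)) H.
  have h1 : j.-1 <= val ob by rewrite /=; lia.
  have h2 : (val ob).+1 = l i by rewrite /=; lia.
  case/or3P: (H h1 h2) => [e|/eqP e|/eqP e].
  - by move/forallP: indA => /(_ x) /implyP /(_ xA) /forallP /(_ y) /implyP /(_ yA) /negP.
  - by move: xA; rewrite e (negbTE bA).
  - by move: yA; rewrite e (negbTE bA).
rewrite indB /g (card_imset _ phinj) cA eqxx /=.
have obB : E ob \in g A by rewrite /g -phaK imset_f.
rewrite obB /= andbT.
apply/imsetP => [[y yA e]].
by move: yA; rewrite -(phK y) -e phaK (negbTE bA).
Qed.
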